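(* Let $L$ be one of the logics $\mathsf{MN}$, $\mathsf{MNF}$, $\mathsf{MNP}$, $\mathsf{MND}$, $\mathsf{MNPF}$, $\mathsf{MNDF}$. Then for any modal formula $A$ the following are equivalent: (1) $L\vdash A$; (2) $A$ is valid in all $L$-frames; (3) $A$ is valid in all finite $L$-frames.
   Context: The modal language has countably many propositional variables, $\bot$, $\to$ and $\Box$, with the other connectives as abbreviations. $\mathsf{MN}$ is the logic whose axioms are all propositional tautologies in this language and whose rules are modus ponens, necessitation ($A / \Box A$) and monotonicity RM ($A\to B / \Box A\to\Box B$). $\mathsf{MNP}$ is $\mathsf{MN}$ plus the axiom scheme $\neg\Box\bot$; $\mathsf{MND}$ is $\mathsf{MN}$ plus the scheme $\neg(\Box A\land\Box\neg A)$; $\mathsf{MNF}$, $\mathsf{MNPF}$, $\mathsf{MNDF}$ are obtained from $\mathsf{MN}$, $\mathsf{MNP}$, $\mathsf{MND}$ respectively by adding the scheme $\Box A\to\Box\Box A$. An $\mathsf{MN}$-frame is a pair $(W,\prec)$ where $W$ is a non-empty set and $\prec$ is a relation between elements of $W$ and non-empty subsets of $W$ such that $x\prec V$ and $V\subseteq U\subseteq W$ imply $x\prec U$. A satisfaction relation $\Vdash$ on it obeys the usual Boolean clauses and: $x\Vdash\Box A$ iff for every $V$ with $x\prec V$ some $y\in V$ has $y\Vdash A$. $A$ is valid in a frame if it holds at every point under every satisfaction relation. The frame is transitive if whenever $x\prec V$ and $y\prec U_y$ for each $y\in V$, then $x\prec\bigcup_{y\in V}U_y$; it is an $\mathsf{MNP}$-frame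 if every $x$ has some $V$ with $x\prec V$; it is an $\mathsf{MND}$-frame if for all $x\in W$, $V\subseteq W$: $x\prec V$ or $x\prec W\setminus V$. The $\mathsf{MN}$-, $\mathsf{MNP}$-, $\mathsf{MND}$-frames are as just defined; $\mathsf{MNF}$-, $\mathsf{MNPF}$-, $\mathsf{MNDF}$-frames are respectively the transitive $\mathsf{MN}$-, $\mathsf{MNP}$-, $\mathsf{MND}$-frames. A frame is finite if $W$ is finite. *)

(* Defs.v *)
From Stdlib Require Import List.

Inductive form : Type :=
| Var : nat -> form
| Bot : form
| Imp : form -> form -> form
| Box : form -> form.

Definition Neg (A : form) : form := Imp A Bot.
Definition Top : form := Neg Bot.
Definition Or (A B : form) : form := Imp (Neg A) B.
Definition And (A B : form) : form := Neg (Imp A (Neg B)).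

(* A boolean assignment to the "propositional atoms" of the modal language,
   i.e. to the propositional variables and to all boxed formulas. *)
Fixpoint beval (v : form -> bool) (A : form) : bool :=
  match A with
  | Var n => v (Var n)
  | Bot => false
  | Imp B C => orb (negb (beval v B)) (beval v C)
  | Box B => v (Box B)
  end.

Definition tautology (A : form) : Prop := forall v : form -> bool, beval v A = true.

Inductive logic : Type := MN | MNP | MND | MNF | MNPF | MNDF.

Definition hasP (L : logic) : bool :=
  match L with MNP | MNPF => true | _ => false end.
Definition hasD (L : logic) : bool :=
  match L with MND | MNDF => true | _ => false end.
Definition hasF (L : logic) : bool :=
  match L with MNF | MNPF | MNDF => true | _ => false end.

Inductive prov (L : logic) : form -> Prop :=
| ax_taut : forall A, tautology A -> prov L A
| ax_P : hasP L = true -> prov L (Neg (Box Bot))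
| ax_D : forall A, hasD L = true -> prov L (Neg (And (Box A) (Box (Neg A))))
| ax_F : forall A, hasF L = true -> prov L (Imp (Box A) (Box (Box A)))
| r_mp : forall A B, prov L (Imp A B) -> prov L A -> prov L B
| r_nec : forall A, prov L A -> prov L (Box A)
| r_rm : forall A B, prov L (Imp A B) -> prov L (Imp (Box A) (Box B)).

Record MNframe := {
  world : Type;
  nbh : world -> (world -> Prop) -> Prop;
  world_nonempty : exists x : world, True;
  nbh_nonempty : forall x V, nbh x V -> exists y, V y;
  nbh_mono : forall x (V U : world -> Prop),
      nbh x V -> (forall y, V y -> U y) -> nbh x U
}.

Fixpoint forces (F : MNframe) (val : nat -> world F -> Prop)
         (x : world F) (A : form) : Prop :=
  match A with
  | Var n => val n x
  | Bot => False
  | Imp B C => forces F val x B -> forces F val x C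
  | Box B => forall V, nbh F x V -> exists y, V y /\ forces F val y B
  end.

Definition valid_in (F : MNframe) (A : form) : Prop :=
  forall (val : nat -> world F -> Prop) (x : world F), forces F val x A.

Definition transitive_frame (F : MNframe) : Prop :=
  forall (x : world F) (V : world F -> Prop) (U : world F -> world F -> Prop),
    nbh F x V -> (forall y, V y -> nbh F y (U y)) ->
    nbh F x (fun z => exists y, V y /\ U y z).

Definition serial_frame (F : MNframe) : Prop :=
  forall x : world F, exists V, nbh F x V.

Definition D_frame (F : MNframe) : Prop :=
  forall (x : world F) (V : world F -> Prop),
    nbh F x V \/ nbh F x (fun z => ~ V z).

Definition is_L_frame (L : logic) (F : MNframe) : Prop :=
  (hasP L = true -> serial_frame F) /\
  (hasD L = true -> D_frame F) /\
  (hasF L = true -> transitive_frame F).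

Definition finite_frame (F : MNframe) : Prop :=
  exists l : list (world F), forall x, In x l.

(* Main.v *)
Require Import Defs.
From Stdlib Require Import List Bool Classical ClassicalEpsilon FunctionalExtensionality ProofIrrelevance.
Import ListNotations.

Ltac bdestr := repeat match goal with
 | |- context [beval ?v ?X] => destruct (beval v X)
 | H : context [beval ?v ?X] |- _ => destruct (beval v X)
 | |- context [?v (Box ?C)] => destruct (v (Box C))
 | H : context [?v (Box ?C)] |- _ => destruct (v (Box C))
 end.

Ltac bsolve := intros; simpl in *; bdestr; simpl in *; try discriminate; try reflexivity; auto.

Lemma form_eq_dec : forall x y : form, {x = y} + {x <> y}.
Proof. decide equality; apply PeanoNat.Nat.eq_dec. Qed.

Lemma beval_And v P Q : beval v (And P Q) = beval v P && beval v Q.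
Proof. simpl. destruct (beval v P), (beval v Q); reflexivity. Qed.
Lemma beval_Neg v P : beval v (Neg P) = negb (beval v P).
Proof. simpl. destruct (beval v P); reflexivity. Qed.

Lemma prov_sem L P Q : (forall v, beval v P = true -> beval v Q = true) -> prov L P -> prov L Q.
Proof. intros H HP. eapply r_mp; [|exact HP]. apply ax_taut. intro v. simpl.
  destruct (beval v P) eqn:E; simpl; [apply H; exact E| reflexivity]. Qed.

Lemma prov_and L P Q : prov L P -> prov L Q -> prov L (And P Q).
Proof. intros HP HQ. eapply r_mp; [|exact HQ]. eapply r_mp; [|exact HP].
  apply ax_taut. intro v. simpl. destruct (beval v P), (beval v Q); reflexivity. Qed.

Lemma prov_sem2 L P Q R : (forall v, beval v P = true -> beval v Q = true -> beval v R = true) -> prov L P -> prov L Q -> prov L R.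
Proof. intros H HP HQ. apply (prov_sem L (And P Q)); [|apply prov_and; auto].
  intros v. rewrite beval_And. intro E. apply andb_true_iff in E. destruct E; auto. Qed.

Lemma prov_Top L : prov L Top.
Proof. apply ax_taut. intro v. reflexivity. Qed.

Definition Cons L P := ~ prov L (Neg P).

Lemma cons_sem L P Q : (forall v, beval v P = true -> beval v Q = true) -> Cons L P -> Cons L Q.
Proof. intros H HP HQ. apply HP. apply (prov_sem L (Neg Q)); auto. intros v. rewrite !beval_Neg.
  destruct (beval v P) eqn:E; [rewrite (H v E)|]; auto. Qed.

Lemma not_cons L P Q : prov L Q -> (forall v, beval v P = true -> beval v Q = true -> False) -> ~ Cons L P.
Proof. intros HQ H HP. apply HP. apply (prov_sem L Q); auto. intros v E. rewrite beval_Neg.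
  destruct (beval v P) eqn:E2; auto. exfalso; eauto. Qed.

Lemma cons_split L P D : Cons L P -> Cons L (And D P) \/ Cons L (And (Neg D) P).
Proof. intros HP. destruct (classic (Cons L (And D P))) as [h|h]; [left; auto|right].
  intro h2. apply HP. unfold Cons in h. apply NNPP in h.
  revert h h2. apply prov_sem2. bsolve. Qed.

Definition lit (s : form -> bool) (D : form) := if s D then D else Neg D.
Fixpoint chi (s : form -> bool) (l : list form) : form :=
  match l with [] => Top | D :: l' => And (lit s D) (chi s l') end.

Lemma beval_chi v s l : beval v (chi s l) = true <-> forall D, In D l -> beval v (lit s D) = true.
Proof. induction l as [|D l IH].
  - simpl. split; [intros _ D []|reflexivity].
  - change (chi s (D::l)) with (And (lit s D) (chi s l)). rewrite beval_And, andb_true_iff, IH. simpl In. split.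
    + intros [h1 h2] E [<-|HE]; auto.
    + intros h; split; auto. Qed.

Lemma chi_ext s s' l : (forall D, In D l -> s D = s' D) -> chi s l = chi s' l.
Proof. induction l as [|D l IH]; simpl; intros H; auto. f_equal.
  - unfold lit. rewrite H; auto.
  - apply IH; auto. Qed.

Lemma atom_contra L s l Q : Cons L (chi s l) -> prov L Q ->
  (forall v, (forall D, In D l -> beval v (lit s D) = true) -> beval v Q = true -> False) -> False.
Proof. intros Hc HQ H. apply (not_cons L (chi s l) Q HQ); auto. intros v E. apply H. apply beval_chi; auto. Qed.

Lemma cons_atom L s l Q : Cons L (chi s l) ->
  (forall v, (forall D, In D l -> beval v (lit s D) = true) -> beval v Q = true) -> Cons L Q.
Proof. intros Hc H. apply (cons_sem L _ _ (fun v E => H v (proj1 (beval_chi v s l) E)) Hc). Qed.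

Lemma atom_true L s l P D : In D l -> Cons L (And (chi s l) P) ->
  (forall v, beval v P = true -> beval v D = true) -> s D = true.
Proof. intros Hin Hc H. destruct (s D) eqn:E; auto. exfalso.
  refine (not_cons L _ Top (prov_Top L) _ Hc). intros v E1 _.
  rewrite beval_And, andb_true_iff in E1. destruct E1 as [E1 E2].
  rewrite beval_chi in E1. specialize (E1 D Hin). unfold lit in E1. rewrite E in E1.
  rewrite beval_Neg, (H v E2) in E1. discriminate. Qed.

Lemma atom_false L s l P D : In D l -> Cons L (And (chi s l) P) ->
  (forall v, beval v P = true -> beval v D = false) -> s D = false.
Proof. intros Hin Hc H. destruct (s D) eqn:E; auto. exfalso.
  refine (not_cons L _ Top (prov_Top L) _ Hc). intros v E1 _.
  rewrite beval_And, andb_true_iff in E1. destruct E1 as [E1 E2].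
  rewrite beval_chi in E1. specialize (E1 D Hin). unfold lit in E1. rewrite E in E1.
  rewrite (H v E2) in E1. discriminate. Qed.

Definition upd (s : form -> bool) D b := fun E => if form_eq_dec E D then b else s E.
Definition supp (l : list form) (s : form -> bool) := forall D, ~ In D l -> s D = false.

Lemma lindenbaum L l : NoDup l -> forall P, Cons L P -> exists s, supp l s /\ Cons L (And (chi s l) P).
Proof.
  induction 1 as [|D l' Hn Hnd IH]; intros P HP.
  - exists (fun _ => false). split. { intros E HE; reflexivity. }
    revert HP. apply cons_sem. bsolve.
  - destruct (cons_split L P D HP) as [H|H]; [ destruct (IH _ H) as [s [Hs Hc]]; exists (upd s D true)
     | destruct (IH _ H) as [s [Hs Hc]]; exists (upd s D false)];
    (split; [ intros E HE; unfold upd; destruct (form_eq_dec E D);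
               [subst; exfalso; apply HE; left; auto | apply Hs; intro; apply HE; right; auto] | ]);
    simpl; rewrite (chi_ext _ s l') by (intros E HE; unfold upd; destruct (form_eq_dec E D); [subst; contradiction|reflexivity]);
    unfold lit at 1, upd at 1; (destruct (form_eq_dec D D); [|congruence]);
    revert Hc; apply cons_sem; bsolve.
Qed.

Definition isAtom L l (s : form -> bool) : Prop := supp l s /\ Cons L (chi s l).
Definition W L l := { s : form -> bool | isAtom L l s }.

Definition nbhC (L : logic) (l : list form) (G : W L l) (X : W L l -> Prop) : Prop :=
  (exists D, X D) /\
  forall C, In (Box C) l -> proj1_sig G (Box C) = true ->
    (exists D, X D /\ proj1_sig D C = true) /\
    (hasF L = true -> exists D, X D /\ proj1_sig D (Box C) = true).

Lemma nbhC_ne L l : forall x V, nbhC L l x V -> exists y, V y.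
Proof. intros x V [h _]; exact h. Qed.

Lemma nbhC_mono L l : forall x (V U : W L l -> Prop), nbhC L l x V -> (forall y, V y -> U y) -> nbhC L l x U.
Proof. intros x V U [[y Hy] H] HVU. split; [exists y; auto|].
  intros C HC HsC. destruct (H C HC HsC) as [[z [Hz1 Hz2]] H2]. split; [exists z; auto|].
  intros hF. destruct (H2 hF) as [w [Hw1 Hw2]]. exists w; auto. Qed.

Definition canon L l (ne : exists x : W L l, True) : MNframe :=
  {| world := W L l; nbh := nbhC L l; world_nonempty := ne;
     nbh_nonempty := nbhC_ne L l; nbh_mono := nbhC_mono L l |}.

Definition valC L l : nat -> W L l -> Prop := fun n G => proj1_sig G (Var n) = true.

Lemma ex_world L l (Hnd : NoDup l) P : Cons L P -> exists G : W L l, Cons L (And (chi (proj1_sig G) l) P).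
Proof. intros HP. destruct (lindenbaum L l Hnd P HP) as [s [Hs Hc]].
  assert (Ha : isAtom L l s). { split; auto. revert Hc; apply cons_sem. bsolve. }
  exists (exist _ s Ha). exact Hc. Qed.

Lemma atom_cons L l (G : W L l) : Cons L (chi (proj1_sig G) l).
Proof. exact (proj2 (proj2_sig G)). Qed.

Lemma truth L l (Hnd : NoDup l) (Hc1 : forall B C, In (Imp B C) l -> In B l /\ In C l)
  (Hc2 : forall B, In (Box B) l -> In B l) ne :
  forall D, In D l -> forall G : W L l, forces (canon L l ne) (valC L l) G D <-> proj1_sig G D = true.
Proof.
  induction D as [n| |D1 IH1 D2 IH2|D IH]; intros Hin [s Hs]; pose proof (proj2 Hs) as Hcs.
  - simpl. unfold valC. tauto.
  - simpl. split; [tauto|]. intro H. apply (atom_contra L _ l Top Hcs (prov_Top L)).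
    intros v Hl _. specialize (Hl Bot Hin). unfold lit in Hl. rewrite H in Hl. discriminate.
  - destruct (Hc1 _ _ Hin) as [h1 h2]. simpl. rewrite (IH1 h1 (exist _ s Hs)), (IH2 h2 (exist _ s Hs)). simpl proj1_sig.
    destruct (s (Imp D1 D2)) eqn:E, (s D1) eqn:E1, (s D2) eqn:E2;
      try (split; intros; auto; discriminate); exfalso;
      apply (atom_contra L _ l Top Hcs (prov_Top L));
      intros v Hl _; pose proof (Hl _ Hin) as k; pose proof (Hl _ h1) as k1; pose proof (Hl _ h2) as k2;
      unfold lit in k, k1, k2; rewrite E in k; rewrite E1 in k1; rewrite E2 in k2; bsolve.
  - pose proof (Hc2 _ Hin) as hD. simpl. split.
    + intros H. destruct (s (Box D)) eqn:E; auto. exfalso.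
      assert (HX : nbhC L l (exist _ s Hs) (fun y => proj1_sig y D = false)).
      { split.
        - assert (Cons L (Neg D)) as hc.
          { intro Hp. assert (prov L D) as h by (revert Hp; apply prov_sem; bsolve).
            apply r_nec in h. apply (atom_contra L _ l _ Hcs h).
            intros v Hl k. specialize (Hl _ Hin). unfold lit in Hl.  rewrite E in Hl. bsolve. }
          destruct (ex_world L l Hnd _ hc) as [y Hy]. exists y.
          apply (atom_false L _ l _ _ hD Hy). bsolve.
        - intros C HC HsC. simpl in HsC. split.
          + assert (Cons L (And C (Neg D))) as hc.
            { intro Hp. assert (prov L (Imp C D)) as h by (revert Hp; apply prov_sem; bsolve).
              apply r_rm in h. apply (atom_contra L _ l _ Hcs h).
              intros v Hl k. pose proof (Hl _ Hin) as k1. pose proof (Hl _ HC) as k2.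
              unfold lit in k1, k2.  rewrite E in k1. rewrite HsC in k2. bsolve. }
            destruct (ex_world L l Hnd _ hc) as [y Hy]. exists y. split.
            * apply (atom_false L _ l _ _ hD Hy). bsolve.
            * apply (atom_true L _ l _ _ (Hc2 _ HC) Hy). bsolve.
          + intros hF. assert (Cons L (And (Box C) (Neg D))) as hc.
            { intro Hp. assert (prov L (Imp (Box C) D)) as h by (revert Hp; apply prov_sem; bsolve).
              apply r_rm in h. pose proof (ax_F L C hF) as h'.
              apply (atom_contra L _ l _ Hcs (prov_and L _ _ h h')).
              intros v Hl k. pose proof (Hl _ Hin) as k1. pose proof (Hl _ HC) as k2.
              unfold lit in k1, k2.  rewrite E in k1. rewrite HsC in k2. bsolve. }
            destruct (ex_world L l Hnd _ hc) as [y Hy]. exists y. split.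
            * apply (atom_false L _ l _ _ hD Hy). bsolve.
            * apply (atom_true L _ l _ _ HC Hy). bsolve. }
      destruct (H _ HX) as [y [Hy1 Hy2]]. apply (IH hD y) in Hy2. congruence.
    + intros E V [_ HV]. destruct (HV D Hin E) as [[y [Hy1 Hy2]] _]. exists y. split; auto.
      apply (IH hD y); auto.
Qed.

Lemma canon_trans L l ne : hasF L = true -> transitive_frame (canon L l ne).
Proof. intros hF x V U [[y0 Hy0] H] HU. split.
  - destruct (HU y0 Hy0) as [[z Hz] _]. exists z. exists y0; auto.
  - intros C HC Hs. destruct (H C HC Hs) as [_ H2]. destruct (H2 hF) as [y [Hy Hy2]].
    destruct (HU y Hy) as [_ H3]. destruct (H3 C HC Hy2) as [[z [Hz Hz1]] H4]. split.
    + exists z; split; auto. exists y; auto.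
    + intros _. destruct (H4 hF) as [w [Hw Hw1]]. exists w; split; auto. exists y; auto.
Qed.

Lemma canon_serial L l (Hnd : NoDup l) (Hc2 : forall B, In (Box B) l -> In B l) ne :
  hasP L = true -> serial_frame (canon L l ne).
Proof. intros hP G. exists (fun _ => True). split. { exists G; auto. }
  intros C HC Hs. split.
  - assert (Cons L C) as hc.
    { intro Hp. apply r_rm in Hp. pose proof (ax_P L hP) as h'.
      apply (atom_contra L _ l _ (atom_cons L l G) (prov_and L _ _ Hp h')).
      intros v Hl k. pose proof (Hl _ HC) as k1. unfold lit in k1. rewrite Hs in k1. bsolve. }
    destruct (ex_world L l Hnd _ hc) as [y Hy]. exists y. split; auto.
    apply (atom_true L _ l _ _ (Hc2 _ HC) Hy). bsolve.
  - intros _. exists G; auto.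
Qed.

Definition req L l (G : W L l) (P : form) : Prop :=
  (exists C, In (Box C) l /\ proj1_sig G (Box C) = true /\ P = C) \/
  (hasF L = true /\ exists C, In (Box C) l /\ proj1_sig G (Box C) = true /\ P = Box C).

Lemma req_in L l (Hc2 : forall B, In (Box B) l -> In B l) G P : req L l G P -> In P l.
Proof. intros [[C [h1 [_ ->]]]|[_ [C [h1 [_ ->]]]]]; auto. Qed.

Lemma nbh_of_req L l G (V : W L l -> Prop) : (exists D, V D) ->
  (forall P, req L l G P -> exists D, V D /\ proj1_sig D P = true) -> nbhC L l G V.
Proof. intros hne H. split; auto. intros C HC Hs. split.
  - apply H. left. exists C; auto.
  - intros hF. apply H. right. split; auto. exists C; auto. Qed.

Lemma req_cons_aux L l (G : W L l) C E : hasD L = true -> In (Box C) l -> proj1_sig G (Box C) = true ->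
  In (Box E) l -> proj1_sig G (Box E) = true -> Cons L (And C E) /\ (hasF L = true -> Cons L (And C (Box E))).
Proof. intros hD HC hC HE hE. split.
  - intro Hp. assert (prov L (Imp C (Neg E))) as h by (revert Hp; apply prov_sem; bsolve).
    apply r_rm in h. pose proof (ax_D L E hD) as h'.
    apply (atom_contra L _ l _ (atom_cons L l G) (prov_and L _ _ h h')).
    intros v Hl k. pose proof (Hl _ HC) as k1. pose proof (Hl _ HE) as k2.
    unfold lit in k1, k2. rewrite hC in k1. rewrite hE in k2. bsolve.
  - intros hF Hp. assert (prov L (Imp C (Neg (Box E)))) as h by (revert Hp; apply prov_sem; bsolve).
    apply r_rm in h. pose proof (ax_D L (Box E) hD) as h'. pose proof (ax_F L E hF) as h''.
    apply (atom_contra L _ l _ (atom_cons L l G) (prov_and L _ _ (prov_and L _ _ h h') h'')).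
    intros v Hl k. pose proof (Hl _ HC) as k1. pose proof (Hl _ HE) as k2.
    unfold lit in k1, k2. rewrite hC in k1. rewrite hE in k2. bsolve.
Qed.

Lemma req_cons L l G P Q : hasD L = true -> req L l G P -> req L l G Q -> Cons L (And P Q).
Proof. intros hD [[C [h1 [h2 ->]]]|[hF [C [h1 [h2 ->]]]]] [[E [e1 [e2 ->]]]|[hF' [E [e1 [e2 ->]]]]].
  - apply (req_cons_aux L l G C E hD h1 h2 e1 e2).
  - apply (req_cons_aux L l G C E hD h1 h2 e1 e2); auto.
  - apply (cons_sem L (And E (Box C))); [bsolve|]. apply (req_cons_aux L l G E C hD e1 e2 h1 h2); auto.
  - apply (cons_atom L _ l _ (atom_cons L l G)). intros v Hl. pose proof (Hl _ h1) as k1. pose proof (Hl _ e1) as k2.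
    unfold lit in k1, k2. rewrite h2 in k1. rewrite e2 in k2. bsolve.
Qed.

Lemma canon_D L l (Hnd : NoDup l) (Hc2 : forall B, In (Box B) l -> In B l) ne :
  hasD L = true -> D_frame (canon L l ne).
Proof. intros hD G V. destruct (classic (nbhC L l G V)) as [h|h]; [left; exact h|right].
  simpl. apply nbh_of_req.
  - apply NNPP; intro hne. apply h. apply nbh_of_req.
    + exists G. apply NNPP; intro k; apply hne; exists G; auto.
    + intros P hP. assert (Cons L P) as hc.
      { apply (cons_sem L (And P P)); [bsolve|]. apply (req_cons L l G P P hD hP hP). }
      destruct (ex_world L l Hnd _ hc) as [y Hy]. exists y. split.
      * apply NNPP; intro k; apply hne; exists y; auto.
      * apply (atom_true L _ l _ _ (req_in L l Hc2 G P hP) Hy). bsolve.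
  - intros Q hQ. apply NNPP; intro hn. apply h. apply nbh_of_req.
    + assert (Cons L Q) as hc.
      { apply (cons_sem L (And Q Q)); [bsolve|]. apply (req_cons L l G Q Q hD hQ hQ). }
      destruct (ex_world L l Hnd _ hc) as [y Hy]. exists y.
      apply NNPP; intro k; apply hn; exists y; split; auto.
      apply (atom_true L _ l _ _ (req_in L l Hc2 G Q hQ) Hy). bsolve.
    + intros P hP. pose proof (req_cons L l G P Q hD hP hQ) as hc.
      destruct (ex_world L l Hnd _ hc) as [y Hy].
      assert (proj1_sig y P = true) as k1 by (apply (atom_true L _ l _ _ (req_in L l Hc2 G P hP) Hy); bsolve).
      assert (proj1_sig y Q = true) as k2 by (apply (atom_true L _ l _ _ (req_in L l Hc2 G Q hQ) Hy); bsolve).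
      exists y. split; auto. apply NNPP; intro k; apply hn; exists y; split; auto.
Qed.

Lemma supp_enum l : exists Ls : list (form -> bool), forall s, supp l s -> In s Ls.
Proof. induction l as [|D l IH].
  - exists [fun _ => false]. intros s Hs. left. apply functional_extensionality. intro x.
    symmetry. apply Hs. intros [].
  - destruct IH as [Ls HL]. exists (map (fun f => upd f D true) Ls ++ map (fun f => upd f D false) Ls).
    intros s Hs. apply in_app_iff.
    assert (h0 : supp l (upd s D false)).
    { intros E HE. unfold upd. destruct (form_eq_dec E D); auto. apply Hs. intros [->|k]; auto. }
    assert (hs : s = upd (upd s D false) D (s D)).
    { apply functional_extensionality. intro x. unfold upd. destruct (form_eq_dec x D); subst; auto. }
    destruct (s D) eqn:E; [left|right]; rewrite hs; [apply (in_map (fun f => upd f D true))|apply (in_map (fun f => upd f D false))]; apply HL; auto.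
Qed.

Lemma W_finite L l : exists lw : list (W L l), forall x, In x lw.
Proof. destruct (supp_enum l) as [Ls HL].
  assert (forall Ls : list (form -> bool), exists lw : list (W L l), forall x : W L l, In (proj1_sig x) Ls -> In x lw) as K.
  { induction Ls0 as [|a Ls0 IH].
    - exists []. intros x [].
    - destruct IH as [lw Hw]. destruct (classic (isAtom L l a)) as [p|np].
      + exists (exist _ a p :: lw). intros [s ps] [k|k].
        * left. simpl in k. subst. f_equal. apply proof_irrelevance.
        * right. apply Hw. exact k.
      + exists lw. intros [s ps] [k|k].
        * simpl in k. subst. contradiction.
        * apply Hw. exact k. }
  destruct (K Ls) as [lw Hw]. exists lw. intros x. apply Hw. apply HL. exact (proj1 (proj2_sig x)).
Qed.

Lemma taut_sound (F : MNframe) val x A : tautology A -> forces F val x A.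
Proof. intros HT.
  set (v := fun B => if excluded_middle_informative (forces F val x B) then true else false).
  assert (K : forall B, beval v B = true <-> forces F val x B).
  { induction B as [n| |B1 IH1 B2 IH2|B IH]; simpl.
    - unfold v. destruct (excluded_middle_informative _); split; auto; discriminate.
    - split; [discriminate|tauto].
    - rewrite orb_true_iff, negb_true_iff. destruct (beval v B1) eqn:E1, (beval v B2) eqn:E2;
      rewrite <- IH1, <- IH2; split; intros; auto; try discriminate; try tauto.
      destruct H; discriminate.
    - unfold v. destruct (excluded_middle_informative _); split; auto; discriminate. }
  apply K. apply HT.
Qed.

Lemma soundness L A : prov L A -> forall F, is_L_frame L F -> valid_in F A.
Proof. intros Hp F [hP [hD hF]]. induction Hp as [A HT|e|A e|A e|A B Hp1 IHHp1 Hp2 IHHp2|A Hp IHHp|A B Hp IHHp]; intros val x.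
  - apply taut_sound; exact HT.
  - simpl. intros Hh. destruct (hP e x) as [V HV]. destruct (Hh V HV) as [y [_ []]].
  - simpl. intros Hh. apply Hh. intros HA HnA.
    destruct (hD e x (fun z => forces F val z A)) as [h|h].
    + destruct (HnA _ h) as [y [k1 k2]]. auto.
    + destruct (HA _ h) as [y [k1 k2]]. auto.
  - simpl. intros HA V HV. apply NNPP; intro Hn.
    set (U := fun (y z : world F) => exists U', nbh F y U' /\ (forall w, U' w -> ~ forces F val w A) /\ U' z).
    assert (HU : forall y, V y -> nbh F y (U y)).
    { intros y Hy. assert (~ (forall U0, nbh F y U0 -> exists z, U0 z /\ forces F val z A)) as k.
      { intro k; apply Hn; exists y; auto. }
      apply not_all_ex_not in k. destruct k as [U0 k].
      apply imply_to_and in k. destruct k as [k1 k2].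
      apply (nbh_mono F y U0); auto. intros z Hz. exists U0. split; auto. split; auto.
      intros w Hw Hf. apply k2. exists w; auto. }
    destruct (HA _ (hF e x V U HV HU)) as [z [[y [Hy [U' [_ [k1 k2]]]]] Hz]].
    exact (k1 z k2 Hz).
  - apply (IHHp1 val x). apply IHHp2.
  - simpl. intros V HV. destruct (nbh_nonempty F x V HV) as [y Hy]. exists y. split; [exact Hy | apply IHHp].
  - simpl. intros HA V HV. destruct (HA V HV) as [y [Hy Hy']]. exists y. split; [exact Hy|].
    apply (IHHp val y). exact Hy'.
Qed.

Fixpoint sub (A : form) : list form :=
  match A with
  | Var n => [Var n]
  | Bot => [Bot]
  | Imp B C => Imp B C :: sub B ++ sub C
  | Box B => Box B :: sub B
  end.

Lemma sub_refl A : In A (sub A).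
Proof. destruct A; simpl; auto. Qed.

Lemma sub_trans A B C : In B (sub A) -> In C (sub B) -> In C (sub A).
Proof. induction A; simpl; intros H1 H2.
  - destruct H1 as [<-|[]]; auto.
  - destruct H1 as [<-|[]]; auto.
  - destruct H1 as [<-|H1]; [exact H2|]. right. apply in_app_iff in H1. apply in_app_iff.
    destruct H1; [left; eauto|right; eauto].
  - destruct H1 as [<-|H1]; [exact H2|]. right; eauto.
Qed.

Lemma completeness L A : (forall F, is_L_frame L F -> finite_frame F -> valid_in F A) -> prov L A.
Proof. intro H. apply NNPP; intro hA.
  set (l := nodup form_eq_dec (sub A)).
  assert (Hnd : NoDup l) by apply NoDup_nodup.
  assert (Hc1 : forall B C, In (Imp B C) l -> In B l /\ In C l).
  { intros B C Hi. unfold l in *. apply nodup_In in Hi. split; apply nodup_In; eapply sub_trans; try exact Hi; simpl; right;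
    apply in_app_iff; [left|right]; apply sub_refl. }
  assert (Hc2 : forall B, In (Box B) l -> In B l).
  { intros B Hi. unfold l in *. apply nodup_In in Hi. apply nodup_In. eapply sub_trans; try exact Hi; simpl; right; apply sub_refl. }
  assert (hin : In A l) by (unfold l; rewrite nodup_In; apply sub_refl).
  assert (Cons L (Neg A)) as hc.
  { intro Hp. apply hA. revert Hp. apply prov_sem. bsolve. }
  destruct (ex_world L l Hnd _ hc) as [G HG].
  assert (ne : exists x : W L l, True) by (exists G; auto).
  assert (hL : is_L_frame L (canon L l ne)).
  { split; [|split].
    - apply canon_serial; auto.
    - apply canon_D; auto.
    - apply canon_trans. }
  assert (hfin : finite_frame (canon L l ne)) by apply W_finite.
  specialize (H _ hL hfin (valC L l) G).
  apply (truth L l Hnd Hc1 Hc2 ne A hin G) in H.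
  assert (proj1_sig G A = false) by (apply (atom_false L _ l _ _ hin HG); bsolve).
  congruence.
Qed.

Theorem theorem3p5 : forall (L : logic) (A : form),
  (prov L A <-> (forall F : MNframe, is_L_frame L F -> valid_in F A)) /\
  ((forall F : MNframe, is_L_frame L F -> valid_in F A) <->
   (forall F : MNframe, is_L_frame L F -> finite_frame F -> valid_in F A)).
Proof.
  intros L A. split; split.
  - apply soundness.
  - intros H. apply completeness. intros F h _. apply H; auto.
  - intros H F h _. apply H; auto.
  - intros H. apply soundness. apply completeness. exact H.
Qed.
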